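(* Let $G=(V_1,E_1)$ and $H=(V_2,E_2)$ be digraphs and let $P$ be any one of the following properties: Taylor; $\operatorname{SD}(\wedge)$; Hobby–McKenzie; $\operatorname{SD}(\vee)$; congruence modular (CM); congruence $n$-permutable for some $n$ (C$n$P); congruence distributive (CD); $\operatorname{SD}(\vee)$ and C$n$P; C$n$P and CM; CD and C$n$P; congruence $3$-permutable (C3P); CD and C3P; Maltsev; arithmetical (CD and Maltsev). If both $G$ and $H$ have $P$, then so do $G\mathbin{\dot\cup}H$ and $G\mathbin{\overline{\cup}}H$. Moreover, if $G$ or $H$ fails $P$, then $G\mathbin{\overline{\cup}}H$ also fails $P$.
   Context: Digraphs are finite and loopless. $G\mathbin{\dot\cup}H$ is the disjoint union digraph on $V_1\dot\cup V_2$ with edge set $E_1\cup E_2$. $G\mathbin{\overline{\cup}}H$ is the structure on $V_1\dot\cup V_2$ with binary relation $E_1\cup E_2$ together with two unary relations interpreted as $V_1$ and $V_2$. A polymorphism of a structure of arity $k$ is a map $f$ from $k$-tuples of elements to elements such that applying $f$ coordinatewise to $k$ tuples of any relation yields a tuple of that relation. A structure ''has'' a property below if it has polymorphisms satisfying the indicated equations for all values of the variables. Weak NU: an idempotent polymorphism $w$ of arity $n>1$ with $w(y,x,\dots,x)=w(x,y,x,\dots,x)=\dots=w(x,\dots,x,y)$. Taylor: has a weak NU polymorphism. $\operatorname{SD}(\wedge)$: a $3$-ary weak NU $w_1$ and a $4$-ary weak NU $w_2$ with $w_1(y,x,x)=w_2(y,x,x,x)$. Hobby–McKenzie: there are $n\ge0$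 and idempotent ternary polymorphisms $d_0,\dots,d_n,p,e_0,\dots,e_n$ with $x=d_0(x,y,z)$, $e_n(x,y,z)=z$; $d_i(x,y,y)=d_{i+1}(x,y,y)$ and $e_i(x,y,y)=e_{i+1}(x,y,y)$ for even $i<n$; $d_i(x,x,y)=d_{i+1}(x,x,y)$ and $e_i(x,x,y)=e_{i+1}(x,x,y)$ for odd $i<n$; $d_n(x,y,y)=p(x,y,y)$ and $p(x,x,y)=e_0(x,x,y)$; $d_i(x,y,x)=d_{i+1}(x,y,x)$ for odd $i<n$ and $e_j(x,y,x)=e_{j+1}(x,y,x)$ for even $j<n$. $\operatorname{SD}(\vee)$: both $\operatorname{SD}(\wedge)$ and Hobby–McKenzie. Congruence $n$-permutable: ternary polymorphisms $p_0,\dots,p_n$ with $p_0(x,y,z)=x$, $p_i(x,x,y)=p_{i+1}(x,y,y)$ for $i<n$, $p_n(x,y,z)=z$; Maltsev means congruence $2$-permutable. CD: ternary polymorphisms $J_0,\dots,J_n$ with $J_0(x,y,z)=x$, $J_i(x,y,x)=x$, $J_i(x,x,y)=J_{i+1}(x,x,y)$ for even $i<n$, $J_i(x,y,y)=J_{i+1}(x,y,y)$ for odd $i<n$, $J_n(x,y,z)=z$. CM: ternary polymorphisms $s_0,\dots,s_{2n},p$ with $s_0(x,y,z)=x$, $s_i(x,y,x)=x$, $s_i(x,y,y)=s_{i+1}(x,y,y)$ for even $i<2n$, $s_i(x,x,y)=s_{i+1}(x,x,y)$ for odd $i<2n$, $s_{2n}(x,y,y)=p(x,y,y)$, $p(x,x,y)=y$.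 Combined properties (''X and Y'') mean both hold. *)

(* Defs.v *)
From Stdlib Require Lists.List.
From mathcomp Require Import all_boot.
Set Implicit Arguments. Unset Strict Implicit. Unset Printing Implicit Defensive.

Record digraph := Digraph {
  dV : finType;
  dE : rel dV;
  dE_loopless : irreflexive dE }.

Record relstr := RelStr {
  rcar : finType;
  redge : rel rcar;
  runary : seq (pred rcar) }.

Definition dstr (G : digraph) : relstr := @RelStr (dV G) (@dE G) [::].

Definition is_left {A B : Type} (u : A + B) : bool :=
  if u is inl _ then true else false.

Definition union_edge (G H : digraph) : rel (dV G + dV H)%type :=
  fun u v => match u, v with
             | inl a, inl b => dE a b
             | inr a, inr b => dE a b
             | _, _ => false
             end.

Definition dunion (G H : digraph) : relstr :=
  @RelStr (dV G + dV H)%type (@union_edge G H) [::].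

Definition ounion (G H : digraph) : relstr :=
  @RelStr (dV G + dV H)%type (@union_edge G H)
    [:: (fun u => is_left u); (fun u => ~~ is_left u)].

Section Pol.
Variable S : relstr.
Local Notation T := (rcar S).

Definition pol (k : nat) (f : {ffun 'I_k -> T} -> T) : Prop :=
  (forall x y : {ffun 'I_k -> T},
      (forall i, redge (x i) (y i)) -> redge (f x) (f y)) /\
  (forall U, Stdlib.Lists.List.In U (runary S) ->
      forall x : {ffun 'I_k -> T}, (forall i, U (x i)) -> U (f x)).

Definition idem (k : nat) (f : {ffun 'I_k -> T} -> T) : Prop :=
  forall x : T, f [ffun _ => x] = x.

Definition ytup (k : nat) (x y : T) (i : 'I_k) : {ffun 'I_k -> T} :=
  [ffun j => if j == i then y else x].

Definition weakNU (n : nat) (w : {ffun 'I_n -> T} -> T) : Prop :=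
  1 < n /\ pol w /\ idem w /\
  forall (x y : T) (i j : 'I_n), w (ytup x y i) = w (ytup x y j).

Definition op3 (f : T -> T -> T -> T) : {ffun 'I_3 -> T} -> T :=
  fun t => f (t ord0) (t (inord 1)) (t (inord 2)).
Definition pol3 (f : T -> T -> T -> T) : Prop := pol (op3 f).
Definition idem3 (f : T -> T -> T -> T) : Prop := forall x, f x x x = x.

Definition Taylor : Prop :=
  exists (n : nat) (w : {ffun 'I_n -> T} -> T), weakNU w.

Definition SDmeet : Prop :=
  exists (w1 : {ffun 'I_3 -> T} -> T) (w2 : {ffun 'I_4 -> T} -> T),
    weakNU w1 /\ weakNU w2 /\
    forall x y : T, w1 (ytup x y ord0) = w2 (ytup x y ord0).

Definition HobbyMcKenzie : Prop :=
  exists (n : nat) (d e : nat -> T -> T -> T -> T) (p : T -> T -> T -> T),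
    (forall i, i <= n -> pol3 (d i) /\ idem3 (d i) /\ pol3 (e i) /\ idem3 (e i)) /\
    pol3 p /\ idem3 p /\
    (forall x y z, d 0 x y z = x) /\
    (forall x y z, e n x y z = z) /\
    (forall i x y, i < n -> ~~ odd i ->
        d i x y y = d i.+1 x y y /\ e i x y y = e i.+1 x y y) /\
    (forall i x y, i < n -> odd i ->
        d i x x y = d i.+1 x x y /\ e i x x y = e i.+1 x x y) /\
    (forall x y, d n x y y = p x y y) /\
    (forall x y, p x x y = e 0 x x y) /\
    (forall i x y, i < n -> odd i -> d i x y x = d i.+1 x y x) /\
    (forall j x y, j < n -> ~~ odd j -> e j x y x = e j.+1 x y x).

Definition SDjoin : Prop := SDmeet /\ HobbyMcKenzie.

Definition CnP (n : nat) : Prop :=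
  exists p : nat -> T -> T -> T -> T,
    (forall i, i <= n -> pol3 (p i)) /\
    (forall x y z, p 0 x y z = x) /\
    (forall i x y, i < n -> p i x x y = p i.+1 x y y) /\
    (forall x y z, p n x y z = z).

Definition Maltsev : Prop := CnP 2.

Definition CD : Prop :=
  exists (n : nat) (J : nat -> T -> T -> T -> T),
    (forall i, i <= n -> pol3 (J i)) /\
    (forall x y z, J 0 x y z = x) /\
    (forall i x y, i <= n -> J i x y x = x) /\
    (forall i x y, i < n -> ~~ odd i -> J i x x y = J i.+1 x x y) /\
    (forall i x y, i < n -> odd i -> J i x y y = J i.+1 x y y) /\
    (forall x y z, J n x y z = z).

Definition CM : Prop :=
  exists (n : nat) (s : nat -> T -> T -> T -> T) (p : T -> T -> T -> T),
    (forall i, i <= 2 * n -> pol3 (s i)) /\ pol3 p /\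
    (forall x y z, s 0 x y z = x) /\
    (forall i x y, i <= 2 * n -> s i x y x = x) /\
    (forall i x y, i < 2 * n -> ~~ odd i -> s i x y y = s i.+1 x y y) /\
    (forall i x y, i < 2 * n -> odd i -> s i x x y = s i.+1 x x y) /\
    (forall x y, s (2 * n) x y y = p x y y) /\
    (forall x y, p x x y = y).

End Pol.

Inductive property :=
  | P_Taylor | P_SDmeet | P_HM | P_SDjoin | P_CM | P_CnP | P_CD
  | P_SDjoin_CnP | P_CnP_CM | P_CD_CnP | P_C3P | P_CD_C3P | P_Maltsev
  | P_Arith.

Definition satisfies (P : property) (S : relstr) : Prop :=
  match P with
  | P_Taylor => Taylor S
  | P_SDmeet => SDmeet S
  | P_HM => HobbyMcKenzie S
  | P_SDjoin => SDjoin S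
  | P_CM => CM S
  | P_CnP => exists n, CnP S n
  | P_CD => CD S
  | P_SDjoin_CnP => SDjoin S /\ exists n, CnP S n
  | P_CnP_CM => (exists n, CnP S n) /\ CM S
  | P_CD_CnP => CD S /\ exists n, CnP S n
  | P_C3P => CnP S 3
  | P_CD_C3P => CD S /\ CnP S 3
  | P_Maltsev => Maltsev S
  | P_Arith => CD S /\ Maltsev S
  end.

(* Main.v *)
Require Import Defs.
From mathcomp Require Import all_boot zify.
Require Import Defs.
Set Implicit Arguments. Unset Strict Implicit. Unset Printing Implicit Defensive.

Section Gen.
Variable S : relstr.
Local Notation T := (rcar S).

Definition x3 (a b c : T) : {ffun 'I_3 -> T} := [ffun i : 'I_3 => nth a [:: a; b; c] i].
Lemma x3_0 a b c : x3 a b c ord0 = a. Proof. by rewrite ffunE. Qed.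
Lemma x3_1 a b c : x3 a b c (inord 1) = b. Proof. by rewrite ffunE inordK. Qed.
Lemma x3_2 a b c : x3 a b c (inord 2) = c. Proof. by rewrite ffunE inordK. Qed.

Lemma pol3P (f : T -> T -> T -> T) :
  pol3 f <-> ((forall a b c a' b' c', redge a a' -> redge b b' -> redge c c' ->
                 redge (f a b c) (f a' b' c')) /\
              (forall U, List.In U (runary S) -> forall a b c, U a -> U b -> U c -> U (f a b c))).
Proof.
split.
- move=> [H1 H2]; split.
  + move=> a b c a' b' c' e1 e2 e3.
    have := H1 (x3 a b c) (x3 a' b' c').
    rewrite /op3 !x3_0 !x3_1 !x3_2; apply=> i.
    rewrite !ffunE; case: i => [[|[|[|i]]] Hi] //=.
  + move=> U HU a b c u1 u2 u3.
    have := H2 U HU (x3 a b c).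
    rewrite /op3 !x3_0 !x3_1 !x3_2; apply=> i.
    rewrite !ffunE; case: i => [[|[|[|i]]] Hi] //=.
- move=> [H1 H2]; split.
  + move=> x y E; rewrite /op3; apply: H1; apply: E.
  + move=> U HU x E; rewrite /op3; apply: H2 => //; apply: E.
Qed.

Lemma pol3_pr1 : pol3 (fun x _ _ : T => x).
Proof. by apply/pol3P; split=> [a b c a' b' c' ->|U _ a b c ->]. Qed.
Lemma pol3_pr3 : pol3 (fun _ _ z : T => z).
Proof. by apply/pol3P; split=> [a b c a' b' c' _ _ ->|U _ a b c _ _ ->]. Qed.


Definition HMn n (d e : nat -> T -> T -> T -> T) (p : T -> T -> T -> T) : Prop :=
    (forall i, i <= n -> pol3 (d i) /\ idem3 (d i) /\ pol3 (e i) /\ idem3 (e i)) /\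
    pol3 p /\ idem3 p /\
    (forall x y z, d 0 x y z = x) /\
    (forall x y z, e n x y z = z) /\
    (forall i x y, i < n -> ~~ odd i ->
        d i x y y = d i.+1 x y y /\ e i x y y = e i.+1 x y y) /\
    (forall i x y, i < n -> odd i ->
        d i x x y = d i.+1 x x y /\ e i x x y = e i.+1 x x y) /\
    (forall x y, d n x y y = p x y y) /\
    (forall x y, p x x y = e 0 x x y) /\
    (forall i x y, i < n -> odd i -> d i x y x = d i.+1 x y x) /\
    (forall j x y, j < n -> ~~ odd j -> e j x y x = e j.+1 x y x).

Definition CDn n (J : nat -> T -> T -> T -> T) : Prop :=
    (forall i, i <= n -> pol3 (J i)) /\
    (forall x y z, J 0 x y z = x) /\
    (forall i x y, i <= n -> J i x y x = x) /\
    (forall i x y, i < n -> ~~ odd i -> J i x x y = J i.+1 x x y) /\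
    (forall i x y, i < n -> odd i -> J i x y y = J i.+1 x y y) /\
    (forall x y z, J n x y z = z).

Definition CMn n (s : nat -> T -> T -> T -> T) (p : T -> T -> T -> T) : Prop :=
    (forall i, i <= 2 * n -> pol3 (s i)) /\ pol3 p /\
    (forall x y z, s 0 x y z = x) /\
    (forall i x y, i <= 2 * n -> s i x y x = x) /\
    (forall i x y, i < 2 * n -> ~~ odd i -> s i x y y = s i.+1 x y y) /\
    (forall i x y, i < 2 * n -> odd i -> s i x x y = s i.+1 x x y) /\
    (forall x y, s (2 * n) x y y = p x y y) /\
    (forall x y, p x x y = y).

Lemma minn_lt i n0 : i <= n0 -> minn i n0 = i.
Proof. by move=> h; apply/minn_idPl. Qed.
Lemma minn_ge i n0 : n0 <= i -> minn i n0 = n0.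
Proof. by move=> h; apply/minn_idPr. Qed.

Definition padz n0 (e : nat -> T -> T -> T -> T) i : T -> T -> T -> T :=
  if i <= n0 then e i else (fun _ _ z => z).

Lemma padz_hi n0 e i x y z : (forall x y z, e n0 x y z = z) -> n0 <= i -> padz n0 e i x y z = z.
Proof.
move=> He h; rewrite /padz; case: leqP => // h'.
by have -> : i = n0 by apply/eqP; rewrite eqn_leq h h'.
Qed.

Lemma padz_lo n0 e i : i <= n0 -> padz n0 e i = e i.
Proof. by rewrite /padz => ->. Qed.

Lemma padz_pol n0 e i : (forall i, i <= n0 -> pol3 (e i)) -> pol3 (padz n0 e i).
Proof. by move=> h; rewrite /padz; case: leqP => [/h|_] //; apply: pol3_pr3. Qed.

Lemma padz_idem n0 e i : (forall i, i <= n0 -> idem3 (e i)) -> idem3 (padz n0 e i).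
Proof. by move=> h; rewrite /padz; case: leqP => [/h|_] //. Qed.

Lemma HM_pad : HobbyMcKenzie S -> exists n0, forall n, n0 <= n -> exists d e p, HMn n d e p.
Proof.
move=> [n0 [d [e [p [Hd [Hp1 [Hp2 [Hd0 [He [Hev [Hod [Hdp [Hpe [Hdo Hee]]]]]]]]]]]]]].
exists n0 => n hn; exists (fun i => d (minn i n0)), (padz n0 e), p.
have Hd' : forall i, n0 <= i -> d (minn i n0) = d n0 by move=> i h; rewrite minn_ge.
split.
  move=> i Hi; split; first by have := Hd (minn i n0) (geq_minr _ _); case.
  split; first by have := Hd (minn i n0) (geq_minr _ _); case=> _ [].
  split; [apply: padz_pol|apply: padz_idem] => j /Hd; case=> _ [_ []] //.
do 2 (split => //).
split; first by move=> x y z; rewrite min0n.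
split; first by move=> x y z; apply: padz_hi.
split.
  move=> i x y Hi Ho; case: (ltnP i n0) => h.
    rewrite !minn_lt ?(ltnW h) // !padz_lo ?(ltnW h) //; exact: Hev.
  by rewrite !Hd' ?(leqW h) // !padz_hi ?(leqW h).
split.
  move=> i x y Hi Ho; case: (ltnP i n0) => h.
    rewrite !minn_lt ?(ltnW h) // !padz_lo ?(ltnW h) //; exact: Hod.
  by rewrite !Hd' ?(leqW h) // !padz_hi ?(leqW h).
split; first by move=> x y; rewrite minn_ge.
split; first by move=> x y; rewrite padz_lo.
split.
  move=> i x y Hi Ho; case: (ltnP i n0) => h.
    by rewrite !minn_lt ?(ltnW h) //; apply: Hdo.
  by rewrite !Hd' ?(leqW h).
move=> i x y Hi Ho; case: (ltnP i n0) => h.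
  by rewrite !padz_lo // ?(ltnW h) //; apply: Hee.
by rewrite !padz_hi ?(leqW h).
Qed.

Lemma CD_pad : CD S -> exists n0, forall n, n0 <= n -> exists J, CDn n J.
Proof.
move=> [n0 [J [Hp [H0 [Hx [He [Ho Hn]]]]]]].
exists n0 => n hn; exists (padz n0 J).
split; first by move=> i _; apply: padz_pol.
split; first by move=> x y z; rewrite padz_lo.
split; first by move=> i x y _; rewrite /padz; case: leqP => // /Hx.
split.
  move=> i x y Hi Hoo; case: (ltnP i n0) => h.
    by rewrite !padz_lo // ?(ltnW h) //; apply: He.
  by rewrite !padz_hi ?(leqW h).
split.
  move=> i x y Hi Hoo; case: (ltnP i n0) => h.
    by rewrite !padz_lo // ?(ltnW h) //; apply: Ho.
  by rewrite !padz_hi ?(leqW h).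
by move=> x y z; rewrite padz_hi.
Qed.

Lemma CM_pad : CM S -> exists n0, forall n, n0 <= n -> exists s p, CMn n s p.
Proof.
move=> [n0 [s [p [Hs [Hp [H0 [Hx [He [Ho [Hsp Hpy]]]]]]]]]].
exists n0 => n hn; exists (fun i => s (minn i (2 * n0))), p.
have hn2 : 2 * n0 <= 2 * n by rewrite leq_mul2l hn orbT.
have Hd' : forall i, 2 * n0 <= i -> s (minn i (2 * n0)) = s (2 * n0) by move=> i h; rewrite minn_ge.
split; first by move=> i _; apply: Hs; apply: geq_minr.
split => //.
split; first by move=> x y z; rewrite min0n.
split; first by move=> i x y _; apply: Hx; apply: geq_minr.
split.
  move=> i x y Hi Hoo; case: (ltnP i (2 * n0)) => h.
    by rewrite !minn_lt ?(ltnW h) //; apply: He.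
  by rewrite !Hd' ?(leqW h).
split.
  move=> i x y Hi Hoo; case: (ltnP i (2 * n0)) => h.
    by rewrite !minn_lt ?(ltnW h) //; apply: Ho.
  by rewrite !Hd' ?(leqW h).
split => //; move=> x y; rewrite minn_ge //.
Qed.

Lemma CnP_pad n0 n : CnP S n0 -> n0 <= n -> CnP S n.
Proof.
move=> [p [Hp [H0 [Hs Hn]]]] hn; exists (padz n0 p).
split; first by move=> i _; apply: padz_pol.
split; first by move=> x y z; rewrite padz_lo.
split; last by move=> x y z; rewrite padz_hi.
move=> i x y Hi; case: (ltnP i n0) => h.
  by rewrite !padz_lo // ?(ltnW h) //; apply: Hs.
by rewrite !padz_hi ?(leqW h).
Qed.

End Gen.

Section Res.
Variables (S R : relstr) (e : rcar R -> rcar S) (r : rcar R -> rcar S -> rcar R)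
  (U : pred (rcar S)).
Hypotheses (H1 : forall a b, redge a b -> redge (e a) (e b))
  (H2 : forall a b, redge (e a) (e b) -> redge a b)
  (H3 : forall d a, r d (e a) = a)
  (H4 : List.In U (runary S))
  (H5 : forall a, U (e a))
  (H6 : forall u, U u -> exists a, u = e a)
  (H7 : runary R = [::]).

Lemma rU d1 d2 u : U u -> r d1 u = r d2 u.
Proof. by move/H6=> [a ->]; rewrite !H3. Qed.

Definition res3 (f : rcar S -> rcar S -> rcar S -> rcar S) : rcar R -> rcar R -> rcar R -> rcar R :=
  fun a b c => r a (f (e a) (e b) (e c)).

Lemma res3_pol f : pol3 f -> pol3 (res3 f).
Proof.
move/pol3P=> [P1 P2]; apply/pol3P; split; last by rewrite H7.
move=> a b c a' b' c' e1 e2 e3; rewrite /res3.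
have /H6 [u Eu] : U (f (e a) (e b) (e c)) by apply: P2 => //.
have /H6 [v Ev] : U (f (e a') (e b') (e c')) by apply: P2 => //.
have := P1 _ _ _ _ _ _ (H1 e1) (H1 e2) (H1 e3).
by rewrite Eu Ev !H3; apply: H2.
Qed.

Lemma res3_eq f a b c : res3 f a b c = r a (f (e a) (e b) (e c)).
Proof. by []. Qed.

Lemma res3E f g a b c b' c' : f (e a) (e b) (e c) = g (e a) (e b') (e c') ->
  res3 f a b c = res3 g a b' c'.
Proof. by rewrite /res3 => ->. Qed.

Lemma res3P f a b c t : f (e a) (e b) (e c) = e t -> res3 f a b c = t.
Proof. by rewrite /res3 => ->. Qed.

Lemma res3_idem f : idem3 f -> idem3 (res3 f).
Proof. by move=> Hf a; apply: res3P; rewrite Hf. Qed.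

Definition resW n (w : {ffun 'I_n -> rcar S} -> rcar S) (i0 : 'I_n)
  (x : {ffun 'I_n -> rcar R}) : rcar R := r (x i0) (w [ffun i => e (x i)]).

Lemma resW_U n (w : {ffun 'I_n -> rcar S} -> rcar S) (x : {ffun 'I_n -> rcar R}) :
  pol w -> U (w [ffun i => e (x i)]).
Proof. by move=> [_ P2]; apply: P2 => // i; rewrite ffunE. Qed.

Lemma resW_ytup n (x y : rcar R) (i : 'I_n) :
  [ffun k => e (ytup x y i k)] = ytup (e x) (e y) i.
Proof. by apply/ffunP=> k; rewrite !ffunE; case: (k == i). Qed.

Lemma resW_wnu n (w : {ffun 'I_n -> rcar S} -> rcar S) (i0 : 'I_n) :
  weakNU w -> weakNU (resW w i0).
Proof.
move=> [Hn [Hp [Hi Hw]]]; split=> //; split; last split.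
- split; last by rewrite H7.
  move=> x y E; rewrite /resW.
  have /H6 [u Eu] := resW_U x Hp.
  have /H6 [v Ev] := resW_U y Hp.
  have := (Hp.1 [ffun i => e (x i)] [ffun i => e (y i)]).
  rewrite Eu Ev !H3 => HH; apply: H2; apply: HH => i; rewrite !ffunE; exact: H1.
- move=> a; rewrite /resW.
  have -> : [ffun i : 'I_n => e ([ffun=> a] i)] = [ffun=> e a] :> {ffun 'I_n -> rcar S} by apply/ffunP=> i; rewrite !ffunE.
  by rewrite Hi H3.
- move=> x y i j; rewrite /resW !resW_ytup (Hw _ _ i j); apply: rU.
  by have := resW_U (ytup x y j) Hp; rewrite resW_ytup.
Qed.

Lemma res_Taylor : Taylor S -> Taylor R.
Proof.
move=> [n [w Hw]]; have i0 : 'I_n by exists 0; case: Hw => /ltnW.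
by exists n, (resW w i0); apply: resW_wnu.
Qed.

Lemma res_SDmeet : SDmeet S -> SDmeet R.
Proof.
move=> [w1 [w2 [Hw1 [Hw2 E]]]].
exists (resW w1 ord0), (resW w2 ord0); split; [exact: resW_wnu|split; [exact: resW_wnu|]].
move=> x y; rewrite /resW !resW_ytup E; apply: rU.
by have := resW_U (ytup x y ord0) Hw2.2.1; rewrite resW_ytup.
Qed.

Lemma res_HM : HobbyMcKenzie S -> HobbyMcKenzie R.
Proof.
move=> [n [d [e' [p [Hd [Hp1 [Hp2 [Hd0 [He [Hev [Hod [Hdp [Hpe [Hdo Hee]]]]]]]]]]]]]].
exists n, (fun i => res3 (d i)), (fun i => res3 (e' i)), (res3 p).
split; [move=> i Hi; have [? [? [? ?]]] := Hd i Hi; split; [exact: res3_pol|split; [exact: res3_idem|split; [exact: res3_pol|exact: res3_idem]]]|].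
split; first exact: res3_pol.
split; first exact: res3_idem.
split; first by move=> x y z; apply: res3P; rewrite Hd0.
split; first by move=> x y z; apply: res3P; rewrite He.
split; first by move=> i x y Hi Ho; have [E1 E2] := Hev i (e x) (e y) Hi Ho; split; apply: res3E.
split; first by move=> i x y Hi Ho; have [E1 E2] := Hod i (e x) (e y) Hi Ho; split; apply: res3E.
split; first by move=> x y; apply: res3E.
split; first by move=> x y; apply: res3E.
split; first by move=> i x y Hi Ho; apply: res3E; apply: Hdo.
by move=> i x y Hi Ho; apply: res3E; apply: Hee.
Qed.

Lemma res_CnP n : CnP S n -> CnP R n.
Proof.
move=> [p [Hp [H0 [Hs Hn]]]].
exists (fun i => res3 (p i)); split; first by move=> i Hi; apply: res3_pol; apply: Hp.
split; first by move=> x y z; apply: res3P; rewrite H0.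
split; first by move=> i x y Hi; apply: res3E; apply: Hs.
by move=> x y z; apply: res3P; rewrite Hn.
Qed.

Lemma res_CD : CD S -> CD R.
Proof.
move=> [n [J [Hp [H0 [Hx [He [Ho Hn]]]]]]].
exists n, (fun i => res3 (J i)); split; first by move=> i Hi; apply: res3_pol; apply: Hp.
split; first by move=> x y z; apply: res3P; rewrite H0.
split; first by move=> i x y Hi; apply: res3P; rewrite Hx.
split; first by move=> i x y Hi Hoo; apply: res3E; apply: He.
split; first by move=> i x y Hi Hoo; apply: res3E; apply: Ho.
by move=> x y z; apply: res3P; rewrite Hn.
Qed.

Lemma res_CM : CM S -> CM R.
Proof.
move=> [n [s [p [Hs [Hp [H0 [Hx [He [Ho [Hsp Hpy]]]]]]]]]].
exists n, (fun i => res3 (s i)), (res3 p).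
split; first by move=> i Hi; apply: res3_pol; apply: Hs.
split; first exact: res3_pol.
split; first by move=> x y z; apply: res3P; rewrite H0.
split; first by move=> i x y Hi; apply: res3P; rewrite Hx.
split; first by move=> i x y Hi Hoo; apply: res3E; apply: He.
split; first by move=> i x y Hi Hoo; apply: res3E; apply: Ho.
split; first by move=> x y; apply: res3E.
by move=> x y; apply: res3P; rewrite Hpy.
Qed.

End Res.

Section Comb.
Variables (G H : digraph) (us : seq (pred (dV G + dV H)%type)).
Hypothesis hus : forall U, List.In U us -> forall u v : (dV G + dV H)%type, is_left u = is_left v -> U u = U v.
Definition SU : relstr := @RelStr (dV G + dV H)%type (@union_edge G H) us.
Local Notation T1 := (dV G). Local Notation T2 := (dV H).
Local Notation T := (rcar SU).

Lemma ue_side (u v : T) : union_edge u v -> is_left u = is_left v.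
Proof. by case: u; case: v. Qed.

Definition sel (s : bool -> bool -> bool -> nat) (a b c : T) : T :=
  match s (is_left a) (is_left b) (is_left c) with 0 => a | 1 => b | _ => c end.

Definition comb3 (fG : T1 -> T1 -> T1 -> T1) (fH : T2 -> T2 -> T2 -> T2) s (a b c : T) : T :=
  match a, b, c with
  | inl a, inl b, inl c => inl (fG a b c)
  | inr a, inr b, inr c => inr (fH a b c)
  | _, _, _ => sel s a b c
  end.

Lemma comb3_pol fG fH s : pol3 (S := dstr G) fG -> pol3 (S := dstr H) fH -> pol3 (S := SU) (comb3 fG fH s).
Proof.
move=> /pol3P [PG _] /pol3P [PH _]; apply/pol3P; split.
- move=> [a|a] [b|b] [c|c] [a'|a'] [b'|b'] [c'|c'] //= e1 e2 e3; rewrite /sel /=;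
  try (case: (s _ _ _) => [|[|?]] //); [exact: PG|exact: PH].
- move=> U HU [a|a] [b|b] [c|c] //= u1 u2 u3; rewrite /sel /=;
  try (case: (s _ _ _) => [|[|?]] //).
  + by rewrite (hus HU (v := inl a)).
  + by rewrite (hus HU (v := inr a)).
Qed.

Lemma comb3_idem fG fH s : idem3 (S := dstr G) fG -> idem3 (S := dstr H) fH -> idem3 (S := SU) (comb3 fG fH s).
Proof. by move=> hG hH [a|a] /=; rewrite ?hG ?hH. Qed.


Definition pr1s : bool -> bool -> bool -> nat := fun _ _ _ => 0.
Definition pr3s : bool -> bool -> bool -> nat := fun _ _ _ => 2.
Definition majs : bool -> bool -> bool -> nat :=
  fun a b c => if a == b then 0 else if a == c then 0 else 1.
Definition mals : bool -> bool -> bool -> nat := fun a b c => if a == b then 2 else 0.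

Ltac side3 := move=> [?|?] [?|?] [?|?]; rewrite /= /sel /=.
Ltac side2 := move=> [?|?] [?|?]; rewrite /= /sel /=.

Lemma comb_HM : HobbyMcKenzie (dstr G) -> HobbyMcKenzie (dstr H) -> HobbyMcKenzie SU.
Proof.
move=> /HM_pad [nG HG] /HM_pad [nH HH].
have [dG [eG [pG [Hd [Hp1 [Hp2 [Hd0 [He [Hev [Hod [Hdp [Hpe [Hdo Hee]]]]]]]]]]]]] := HG (nG + nH) (leq_addr _ _).
have [dH [eH [pH [Kd [Kp1 [Kp2 [Kd0 [Ke [Kev [Kod [Kdp [Kpe [Kdo Kee]]]]]]]]]]]]] := HH (nG + nH) (leq_addl _ _).
exists (nG + nH), (fun i => comb3 (dG i) (dH i) pr1s), (fun i => comb3 (eG i) (eH i) pr3s),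
  (comb3 pG pH mals).
split.
  move=> i Hi; have [? [? [? ?]]] := Hd i Hi; have [? [? [? ?]]] := Kd i Hi.
  by split; [apply: comb3_pol|split; [apply: comb3_idem|split; [apply: comb3_pol|apply: comb3_idem]]].
split; first exact: comb3_pol.
split; first exact: comb3_idem.
split; first by side3; rewrite ?Hd0 ?Kd0.
split; first by side3; rewrite ?He ?Ke.
split.
  move=> i [x|x] [y|y] Hi Ho; rewrite /= /sel //=;
   [have [-> ->] := Hev i x y Hi Ho| have [-> ->] := Kev i x y Hi Ho] => //.
split.
  move=> i [x|x] [y|y] Hi Ho; rewrite /= /sel //=;
   [have [-> ->] := Hod i x y Hi Ho| have [-> ->] := Kod i x y Hi Ho] => //.
split; first by side2; rewrite ?Hdp ?Kdp.
split; first by side2; rewrite ?Hpe ?Kpe.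
split; first by move=> i [x|x] [y|y] Hi Ho; rewrite /= /sel //= ?(Hdo i x y Hi Ho) ?(Kdo i x y Hi Ho).
by move=> i [x|x] [y|y] Hi Ho; rewrite /= /sel //= ?(Hee i x y Hi Ho) ?(Kee i x y Hi Ho).
Qed.


Lemma comb_CM : CM (dstr G) -> CM (dstr H) -> CM SU.
Proof.
move=> /CM_pad [nG HG] /CM_pad [nH HH].
have [sG [pG [Hs [Hp [H0 [Hx [He [Ho [Hsp Hpy]]]]]]]]] := HG (nG + nH) (leq_addr _ _).
have [sH [pH [Ks [Kp [K0 [Kx [Ke [Ko [Ksp Kpy]]]]]]]]] := HH (nG + nH) (leq_addl _ _).
exists (nG + nH), (fun i => comb3 (sG i) (sH i) pr1s), (comb3 pG pH mals).
split; first by move=> i Hi; apply: comb3_pol; [apply: Hs|apply: Ks].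
split; first exact: comb3_pol.
split; first by side3; rewrite ?H0 ?K0.
split; first by move=> i [x|x] [y|y] Hi; rewrite /= /sel //= ?(Hx i x y Hi) ?(Kx i x y Hi).
split; first by move=> i [x|x] [y|y] Hi Ho1; rewrite /= /sel //= ?(He i x y Hi Ho1) ?(Ke i x y Hi Ho1).
split; first by move=> i [x|x] [y|y] Hi Ho1; rewrite /= /sel //= ?(Ho i x y Hi Ho1) ?(Ko i x y Hi Ho1).
split; first by side2; rewrite ?Hsp ?Ksp.
by side2; rewrite ?Hpy ?Kpy.
Qed.

Definition cds n i := if i == 0 then pr1s else if n <= i then pr3s else majs.

Lemma comb_CD : CD (dstr G) -> CD (dstr H) -> CD SU.
Proof.
move=> /CD_pad [nG HG] /CD_pad [nH HH].
set n := 2 * (nG + nH).+1.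
have hG : nG <= n by rewrite /n; lia.
have hH : nH <= n by rewrite /n; lia.
have [JG [Hp [H0 [Hx [He [Ho Hn]]]]]] := HG n hG.
have [JH [Kp [K0 [Kx [Ke [Ko Kn]]]]]] := HH n hH.
exists n, (fun i => comb3 (JG i) (JH i) (cds n i)).
split; first by move=> i Hi; apply: comb3_pol; [apply: Hp|apply: Kp].
split; first by side3; rewrite ?H0 ?K0.
split.
  move=> i [x|x] [y|y] Hi; rewrite /= /sel //= ?(Hx i x y Hi) ?(Kx i x y Hi) //;
  rewrite /cds; case: (i == 0) => //; case: (n <= i) => //.
split.
  move=> i x y Hi Hoo.
  have h1 : (n <= i) = false by apply/negbTE; rewrite -ltnNge.
  have h2 : (n <= i.+1) = false.
    apply/negbTE; rewrite -ltnNge ltn_neqAle Hi andbT.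
    apply/negP=> /eqP E; by have := congr1 odd E; rewrite /n oddM /= Hoo.
  have E1 := fun x y => He i x y Hi Hoo; have E2 := fun x y => Ke i x y Hi Hoo.
  move: x y; rewrite /cds h1 h2; case: (i == 0); side2; rewrite ?E1 ?E2 //.
split.
  move=> i x y Hi Hoo.
  have h1 : (n <= i) = false by apply/negbTE; rewrite -ltnNge.
  have h0 : (i == 0) = false by case: i Hoo {Hi h1}.
  have E1 := fun x y => Ho i x y Hi Hoo; have E2 := fun x y => Ko i x y Hi Hoo.
  move: x y; rewrite /cds h1 h0; case: (n <= i.+1); side2; rewrite ?E1 ?E2 //.
have hn0 : (n == 0) = false by rewrite /n muln_eq0.
rewrite /cds leqnn hn0; side3; rewrite ?Hn ?Kn //.
Qed.

Definition cps n i := if n <= i then pr3s else if i.+1 == n then mals else pr1s.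

Lemma comb_CnP n : 1 < n -> CnP (dstr G) n -> CnP (dstr H) n -> CnP SU n.
Proof.
move=> n2 [pG [Hp [H0 [Hs Hn]]]] [pH [Kp [K0 [Ks Kn]]]].
exists (fun i => comb3 (pG i) (pH i) (cps n i)).
split; first by move=> i Hi; apply: comb3_pol; [apply: Hp|apply: Kp].
have c0 : cps n 0 = pr1s.
  rewrite /cps; case: n n2 {Hp H0 Hs Hn Kp K0 Ks Kn} => [|[|n]] //.
split; first by side3; rewrite ?H0 ?K0 // c0.
split.
  move=> i x y Hi.
  have h1 : (n <= i) = false by apply/negbTE; rewrite -ltnNge.
  have E1 := fun x y => Hs i x y Hi; have E2 := fun x y => Ks i x y Hi.
  move: x y; rewrite /cps h1; case: eqP => [E|E].
    have -> : (n <= i.+1) = true by rewrite E leqnn.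
    by side2; rewrite ?E1 ?E2.
  have -> : (n <= i.+1) = false.
    by apply/negbTE; rewrite -ltnNge ltn_neqAle Hi andbT; apply/eqP.
  by case: (i.+2 == n); side2; rewrite ?E1 ?E2.
by side3; rewrite ?Hn ?Kn // /cps leqnn.
Qed.

Lemma comb_exCnP : (exists n, CnP (dstr G) n) -> (exists n, CnP (dstr H) n) -> exists n, CnP SU n.
Proof.
move=> [nG HG] [nH HH]; exists (nG + nH).+2; apply: comb_CnP => //.
  by apply: CnP_pad HG _; lia.
by apply: CnP_pad HH _; lia.
Qed.


Definition getL (d : T1) (u : T) : T1 := if u is inl a then a else d.
Definition getR (d : T2) (u : T) : T2 := if u is inr a then a else d.

Section CW.
Variables (n : nat) (wG : {ffun 'I_n.+1 -> T1} -> T1) (wH : {ffun 'I_n.+1 -> T2} -> T2).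

Definition combW (x : {ffun 'I_n.+1 -> T}) : T :=
  match x ord0 with
  | inl a => if [forall i, is_left (x i)] then inl (wG [ffun i => getL a (x i)])
             else x (odflt ord0 [pick i | is_left (x i)])
  | inr b => if [forall i, ~~ is_left (x i)] then inr (wH [ffun i => getR b (x i)])
             else x (odflt ord0 [pick i | is_left (x i)])
  end.

Lemma combW_inl (z : 'I_n.+1 -> T1) : combW [ffun i => inl (z i)] = inl (wG [ffun i => z i]).
Proof.
rewrite /combW ffunE.
have -> : [forall i, is_left ([ffun i => inl (z i) : T] i)] by apply/forallP=> i; rewrite ffunE.
by congr (inl (wG _)); apply/ffunP=> i; rewrite !ffunE.
Qed.

Lemma combW_inr (z : 'I_n.+1 -> T2) : combW [ffun i => inr (z i)] = inr (wH [ffun i => z i]).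
Proof.
rewrite /combW ffunE.
have -> : [forall i, ~~ is_left ([ffun i => inr (z i) : T] i)] by apply/forallP=> i; rewrite ffunE.
by congr (inr (wH _)); apply/ffunP=> i; rewrite !ffunE.
Qed.

Definition mixed (x : {ffun 'I_n.+1 -> T}) :=
  ~~ [forall i, is_left (x i)] && ~~ [forall i, ~~ is_left (x i)].

Lemma combW_mixE x : mixed x -> combW x = x (odflt ord0 [pick i | is_left (x i)]).
Proof. by rewrite /mixed /combW => /andP [/negbTE -> /negbTE ->]; case: (x ord0). Qed.

Lemma combW_mix (x : {ffun 'I_n.+1 -> T}) (u : T) : (exists i, is_left (x i)) -> (exists j, ~~ is_left (x j)) ->
  (forall i, is_left (x i) -> x i = u) -> combW x = u.
Proof.
move=> [i Hi] [j Hj] Hu; rewrite combW_mixE.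
  by case: pickP => [k Hk|/(_ i)]; [apply: Hu|rewrite Hi].
apply/andP; split; apply/negP=> /forallP HH.
  by move: (HH j); rewrite (negbTE Hj).
by move: (HH i); rewrite Hi.
Qed.

Lemma allL (x : {ffun 'I_n.+1 -> T}) d : [forall i, is_left (x i)] -> x = [ffun i => inl (getL d (x i))].
Proof. by move=> /forallP HH; apply/ffunP=> i; rewrite ffunE; move: (HH i); case: (x i). Qed.

Lemma allR (x : {ffun 'I_n.+1 -> T}) d : [forall i, ~~ is_left (x i)] -> x = [ffun i => inr (getR d (x i))].
Proof. by move=> /forallP HH; apply/ffunP=> i; rewrite ffunE; move: (HH i); case: (x i). Qed.

Lemma combW_pol : pol (S := dstr G) wG -> pol (S := dstr H) wH -> pol (S := SU) combW.
Proof.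
move=> [PG _] [PH _]; split.
- move=> x y E.
  have Es : forall i, is_left (x i) = is_left (y i) by move=> i; apply: ue_side; apply: E.
  case: (boolP [forall i, is_left (x i)]) => hl.
    have hl' : [forall i, is_left (y i)] by rewrite -(eq_forallb Es).
    case Ex0 : (x ord0) => [a|a]; last by move/forallP: hl => /(_ ord0); rewrite Ex0.
    case Ey0 : (y ord0) => [b|b]; last by move/forallP: hl' => /(_ ord0); rewrite Ey0.
    rewrite (allL a hl) (allL b hl') !combW_inl /=; apply: PG => i; rewrite !ffunE.
    by move: (E i) (forallP hl i) (forallP hl' i); case: (x i); case: (y i) => //=.
  case: (boolP [forall i, ~~ is_left (x i)]) => hr.
    have hr' : [forall i, ~~ is_left (y i)] by rewrite -(eq_forallb (fun i => congr1 negb (Es i))).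
    case Ex0 : (x ord0) => [a|a]; first by move/forallP: hr => /(_ ord0); rewrite Ex0.
    case Ey0 : (y ord0) => [b|b]; first by move/forallP: hr' => /(_ ord0); rewrite Ey0.
    rewrite (allR a hr) (allR b hr') !combW_inr /=; apply: PH => i; rewrite !ffunE.
    by move: (E i) (forallP hr i) (forallP hr' i); case: (x i); case: (y i) => //=.
  have mx : mixed x by rewrite /mixed hl hr.
  have my : mixed y by rewrite /mixed -(eq_forallb Es) -(eq_forallb (fun i => congr1 negb (Es i))) hl hr.
  rewrite !combW_mixE // -(eq_pick Es); apply: E.
- move=> U HU x E.
  case: (boolP [forall i, is_left (x i)]) => hl.
    case Ex0 : (x ord0) => [a|a]; last by move/forallP: hl => /(_ ord0); rewrite Ex0.
    by rewrite (allL a hl) combW_inl (hus HU (v := x ord0)) ?Ex0 // -Ex0; apply: E.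
  case: (boolP [forall i, ~~ is_left (x i)]) => hr.
    case Ex0 : (x ord0) => [a|a]; first by move/forallP: hr => /(_ ord0); rewrite Ex0.
    by rewrite (allR a hr) combW_inr (hus HU (v := x ord0)) ?Ex0 // -Ex0; apply: E.
  by rewrite combW_mixE ?E // /mixed hl hr.
Qed.

Lemma combW_idem : idem (S := dstr G) wG -> idem (S := dstr H) wH -> idem (S := SU) combW.
Proof.
move=> hG hH [a|a].
  by rewrite (combW_inl (fun _ => a)) hG.
by rewrite (combW_inr (fun _ => a)) hH.
Qed.

Lemma other (i : 'I_n.+1) : 0 < n -> exists k : 'I_n.+1, k != i.
Proof.
move=> n0; case: (eqVneq i ord0) => [->|h]; last by exists ord0; rewrite eq_sym.
by exists (inord 1); apply/eqP=> /(congr1 val); rewrite /= inordK.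
Qed.

Lemma combW_ytup (u v : T) (i : 'I_n.+1) : 0 < n ->
  combW (ytup u v i) = match u, v with
    | inl a, inl b => inl (wG (ytup (S := dstr G) a b i))
    | inr a, inr b => inr (wH (ytup (S := dstr H) a b i))
    | inl a, inr _ => inl a
    | inr _, inl a => inl a end.
Proof.
move=> n0; have [k Hk] := other i n0.
case: u => a; case: v => b.
- have -> : ytup (S := SU) (inl a) (inl b) i = [ffun k => inl (ytup (S := dstr G) a b i k)] :> {ffun 'I_n.+1 -> T}.
    by apply/ffunP=> j; rewrite !ffunE; case: (j == i).
  by rewrite combW_inl ffunK.
- apply: combW_mix.
  + by exists k; rewrite ffunE (negbTE Hk).
  + by exists i; rewrite ffunE eqxx.
  + by move=> j; rewrite ffunE; case: (j == i).
- apply: combW_mix.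
  + by exists i; rewrite ffunE eqxx.
  + by exists k; rewrite ffunE (negbTE Hk).
  + by move=> j; rewrite ffunE; case: (j == i).
- have -> : ytup (S := SU) (inr a) (inr b) i = [ffun k => inr (ytup (S := dstr H) a b i k)] :> {ffun 'I_n.+1 -> T}.
    by apply/ffunP=> j; rewrite !ffunE; case: (j == i).
  by rewrite combW_inr ffunK.
Qed.

Lemma combW_wnu : weakNU (S := dstr G) wG -> weakNU (S := dstr H) wH -> weakNU (S := SU) combW.
Proof.
move=> [n1 [pG [iG eG]]] [_ [pH [iH eH]]].
split=> //; split; first exact: combW_pol.
split; first exact: combW_idem.
move=> u v i j; rewrite !combW_ytup //.
by case: u => a; case: v => b; rewrite ?(eG a b i j) ?(eH a b i j).
Qed.

End CW.

Lemma comb_SDmeet : SDmeet (dstr G) -> SDmeet (dstr H) -> SDmeet SU.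
Proof.
move=> [w1 [w2 [H1 [H2 E]]]] [v1 [v2 [K1 [K2 F]]]].
exists (combW w1 v1), (combW w2 v2).
split; first exact: combW_wnu.
split; first exact: combW_wnu.
move=> u v; rewrite !combW_ytup //.
by case: u => a; case: v => b; rewrite ?E ?F.
Qed.

End Comb.

Lemma iter_idem (T : finType) (f : T -> T) (c : T) :
  iter #|T|`! f (iter #|T|`! f c) = iter #|T|`! f c.
Proof.
set N := #|T|; set L := N`!.
pose h := fun i : 'I_N.+1 => iter i f c.
have [i [j [lij Eij]]] : exists i j : 'I_N.+1, i < j /\ h i = h j.
  case: (boolP [exists i : 'I_N.+1, exists j : 'I_N.+1, (i < j) && (h i == h j)]) =>
    [/existsP [i /existsP [j /andP [l /eqP E]]]|ne]; first by exists i, j.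
  exfalso; have inj : injective h.
    move=> i j E; apply: val_inj; case: (ltngtP i j) => // l; exfalso; move/negP: ne; apply;
    apply/existsP; [exists i; apply/existsP; exists j | exists j; apply/existsP; exists i];
    by rewrite l ?E eqxx.
  by move/leq_card: inj; rewrite card_ord ltnn.
set a := nat_of_ord i; set p := j - a.
have hj : (j : nat) = a + p by rewrite /p; lia.
have per : forall u, iter (u + j) f c = iter (u + a) f c.
  by move=> u; rewrite !iterD; move: Eij; rewrite /h => ->.
have perk : forall k t, iter (t + a + k * p) f c = iter (t + a) f c.
  elim=> [|k IH] t; first by rewrite addn0.
  have -> : t + a + k.+1 * p = (t + k * p) + j by rewrite hj mulSn; lia.
  by rewrite per addnAC IH.
have p0 : 0 < p by rewrite /p; lia.
have pN : p <= N by have := ltn_ord j; rewrite /p; lia.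
have dp : p %| L by apply: dvdn_fact; rewrite p0 pN.
have aL : a <= L by apply: leq_trans (fact_geq N); have := ltn_ord i; rewrite /a; lia.
rewrite -iterD.
have -> : L + L = (L - a) + a + (L %/ p) * p by rewrite divnK //; lia.
by rewrite perk; congr iter; lia.
Qed.

Section Flex.
Variable S : relstr.
Local Notation T := (rcar S).

Definition gop := (nat -> T) -> T.
Definition gpol n (F : gop) :=
  (forall x y : nat -> T, (forall k, k < n -> redge (x k) (y k)) -> redge (F x) (F y)) /\
  (forall U, List.In U (runary S) -> forall x : nat -> T, (forall k, k < n -> U (x k)) -> U (F x)).
Definition gloc n (F : gop) := forall x y : nat -> T, (forall k, k < n -> x k = y k) -> F x = F y.
Definition gidem (F : gop) := forall a, F (fun _ => a) = a.
Definition yt (x y : T) (p : nat) : nat -> T := fun k => if k == p then y else x.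

Variables (m : nat) (w : {ffun 'I_m -> T} -> T).
Hypothesis hw : weakNU w.

Definition W : gop := fun x => w [ffun i : 'I_m => x i].

Lemma W_pol : gpol m W.
Proof.
case: hw => _ [[P1 P2] _]; split.
  by move=> x y E; apply: P1 => i; rewrite !ffunE; apply: E.
by move=> U HU x E; apply: P2 => // i; rewrite !ffunE; apply: E.
Qed.

Lemma W_loc : gloc m W.
Proof. by move=> x y E; rewrite /W; congr w; apply/ffunP=> i; rewrite !ffunE; apply: E. Qed.

Lemma W_idem : gidem W.
Proof. by case: hw => _ [_ [hi _]] a; rewrite /W hi. Qed.

Lemma W_yt x y p q : p < m -> q < m -> W (yt x y p) = W (yt x y q).
Proof.
case: hw => _ [_ [_ he]] hp hq.
have -> : W (yt x y p) = w (ytup x y (Ordinal hp)).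
  by rewrite /W; congr w; apply/ffunP=> i; rewrite !ffunE.
have -> : W (yt x y q) = w (ytup x y (Ordinal hq)).
  by rewrite /W; congr w; apply/ffunP=> i; rewrite !ffunE.
by apply: he.
Qed.

Lemma m1 : 1 < m. Proof. by case: hw. Qed.

Definition g x c := W (yt x c 0).

Fixpoint tree d : gop :=
  if d is d'.+1 then fun x => W (fun i => tree d' (fun k => x (i * m ^ d' + k))) else fun x => x 0.

Lemma bnd d i k : i < m -> k < m ^ d -> i * m ^ d + k < m ^ d.+1.
Proof. by move=> hi hk; rewrite expnS; nia. Qed.

Lemma tree_pol d : gpol (m ^ d) (tree d).
Proof.
elim: d => [|d [IH1 IH2]] /=.
  by split; [move=> x y E; apply: E|move=> U HU x E; apply: E].
split.
  move=> x y E; apply: W_pol.1 => i hi; apply: IH1 => k hk; apply: E; exact: bnd.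
move=> U HU x E; apply: W_pol.2 => // i hi; apply: IH2 => // k hk; apply: E; exact: bnd.
Qed.

Lemma tree_loc d : gloc (m ^ d) (tree d).
Proof.
elim: d => [|d IH] x y E /=; first by apply: E.
by apply: W_loc => i hi; apply: IH => k hk; apply: E; apply: bnd.
Qed.

Lemma tree_idem d : gidem (tree d).
Proof.
elim: d => [|d IH] a //=.
by rewrite -{2}(W_idem a); apply: W_loc => i _; apply: IH.
Qed.

Lemma tree_yt d x y p : p < m ^ d -> tree d (yt x y p) = iter d (g x) y.
Proof.
elim: d p => [|d IH] p hp /=.
  by move: hp; rewrite expn0 ltnS leqn0 => /eqP ->; rewrite /yt eqxx.
have M0 : 0 < m ^ d by rewrite expn_gt0; case: m m1.
set q := p %/ m ^ d; set r := p %% m ^ d.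
have hq : q < m by rewrite /q ltn_divLR // -expnS.
have hr : r < m ^ d by rewrite /r ltn_pmod.
have Ep : p = q * m ^ d + r by rewrite /q /r -divn_eq.
rewrite (W_loc (y := yt x (iter d (g x) y) q)).
  by rewrite (W_yt _ _ hq (ltnW m1)).
move=> i hi; rewrite /yt; case: eqP => [->|ne].
  rewrite -(IH r hr); apply: tree_loc => k hk; rewrite /yt Ep eqn_add2l //.
rewrite -{2}(tree_idem d x); apply: tree_loc => k hk; rewrite /yt.
case: eqP => // E; exfalso; apply: ne.
by rewrite /q -E divnMDl // divn_small // addn0.
Qed.


Definition L := #|T|`!.
Definition K' := (m ^ L).-1.
Definition V := tree L.

Lemma K_eq : m ^ L = K'.+1.
Proof. by rewrite /K' prednK // expn_gt0; case: m m1. Qed.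

Lemma K'_gt0 : 0 < K'.
Proof.
have : 1 < m ^ L by rewrite -{1}(expn0 m) ltn_exp2l ?m1 // /L fact_gt0.
by rewrite K_eq.
Qed.

Lemma V_pol : gpol K'.+1 V. Proof. by rewrite -K_eq; apply: tree_pol. Qed.
Lemma V_loc : gloc K'.+1 V. Proof. by rewrite -K_eq; apply: tree_loc. Qed.
Lemma V_yt x y p : p < K'.+1 -> V (yt x y p) = iter L (g x) y.
Proof. by rewrite -K_eq; apply: tree_yt. Qed.

Fixpoint cmb j : gop :=
  if j is j'.+1 then fun x => V (fun i => if i == 0 then cmb j' x else x (j' * K' + i))
  else fun x => x 0.

Lemma cmb_pol j : gpol (j * K').+1 (cmb j).
Proof.
elim: j => [|j [IH1 IH2]] /=.
  by split; [move=> x y E; apply: E|move=> U HU x E; apply: E].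
split.
  move=> x y E; apply: V_pol.1 => i hi; case: eqP => _.
    by apply: IH1 => k hk; apply: E; rewrite mulSn; lia.
  by apply: E; rewrite mulSn; lia.
move=> U HU x E; apply: V_pol.2 => // i hi; case: eqP => _.
  by apply: IH2 => // k hk; apply: E; rewrite mulSn; lia.
by apply: E; rewrite mulSn; lia.
Qed.

Lemma cmb_loc j : gloc (j * K').+1 (cmb j).
Proof.
elim: j => [|j IH] x y E /=; first by apply: E.
apply: V_loc => i hi; case: eqP => _.
  by apply: IH => k hk; apply: E; rewrite mulSn; lia.
by apply: E; rewrite mulSn; lia.
Qed.

Lemma cmb_idem j : gidem (cmb j).
Proof.
elim: j => [|j IH] a //=.
transitivity (V (fun _ => a)); last exact: tree_idem.
by apply: V_loc => i _; case: eqP => // _; rewrite IH.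
Qed.

Lemma cmb_yt j x y p : p < (j * K').+1 -> cmb j (yt x y p) = if j == 0 then y else iter L (g x) y.
Proof.
elim: j p => [|j IH] p hp /=.
  by move: hp; rewrite mul0n ltnS leqn0 => /eqP ->; rewrite /yt eqxx.
case: (leqP p (j * K')) => hpj.
  rewrite (V_loc (y := yt x (cmb j (yt x y p)) 0)).
    rewrite V_yt // IH //; case: (j == 0) => //; exact: iter_idem.
  move=> i hi; rewrite /yt; case: eqP => // i0.
  by case: eqP => // E; lia.
set i0 := p - j * K'.
have hi0 : 0 < i0 < K'.+1 by move: hp; rewrite mulSn /i0; lia.
rewrite (V_loc (y := yt x y i0)).
  by apply: V_yt; case/andP: hi0.
move=> i hi; rewrite /yt; case: eqP => [->|ne].
  rewrite (_ : (0 == i0) = false); last by case: i0 hi0.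
  transitivity (cmb j (fun _ => x)); last exact: cmb_idem.
  by apply: cmb_loc => k hk; rewrite /yt; case: eqP => // E; lia.
by congr (if _ then _ else _); apply/eqP/eqP; rewrite /i0; lia.
Qed.


Lemma flex_wnu j : 0 < j -> exists w' : {ffun 'I_(j * K').+1 -> T} -> T, weakNU w'.
Proof.
move=> j0; exists (fun x => cmb j (fun k => x (inord k))).
have [P1 P2] := cmb_pol j.
split; first by rewrite ltnS muln_gt0 j0 K'_gt0.
split; first split.
- by move=> x y E; apply: P1 => k _; apply: E.
- by move=> U HU x E; apply: P2 => // k _; apply: E.
split.
  move=> a; transitivity (cmb j (fun _ => a)); last exact: cmb_idem.
  by apply: cmb_loc => k _; rewrite ffunE.
move=> x y p q.
have E : forall r : 'I_(j * K').+1, cmb j (fun k => ytup x y r (inord k)) = cmb j (yt x y r).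
  move=> r; apply: cmb_loc => k hk; rewrite ffunE /yt.
  by congr (if _ then _ else _); apply/eqP/eqP => [<-|->]; rewrite ?inordK // inord_val.
rewrite !E !cmb_yt //.
Qed.

End Flex.

Lemma Taylor_flex (S : relstr) : Taylor S ->
  exists K, 0 < K /\ forall j, 0 < j -> exists w : {ffun 'I_(j * K).+1 -> rcar S} -> rcar S, weakNU w.
Proof.
move=> [m [w hw]]; exists (K' S m); split; first exact: K'_gt0 hw.
by move=> j j0; apply: (flex_wnu hw).
Qed.

Lemma comb_Taylor (G H : digraph) us (hus : forall U, List.In U us -> forall u v : (dV G + dV H)%type, is_left u = is_left v -> U u = U v) :
  Taylor (dstr G) -> Taylor (dstr H) -> Taylor (SU us).
Proof.
move=> /Taylor_flex [KG [kG FG]] /Taylor_flex [KH [kH FH]].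
move: (FG KH kH); rewrite mulnC => -[wG hG].
have [wH hH] := FH KG kG.
exists (KG * KH).+1; eexists; exact: (combW_wnu hus hG hH).
Qed.

Lemma part1 (P : property) (G H : digraph) us (hus : forall U, List.In U us -> forall u v : (dV G + dV H)%type, is_left u = is_left v -> U u = U v) :
  satisfies P (dstr G) -> satisfies P (dstr H) -> satisfies P (SU us).
Proof.
case: P => /=.
- exact: comb_Taylor.
- exact: comb_SDmeet.
- exact: comb_HM.
- by move=> [a b] [c d]; split; [apply: comb_SDmeet|apply: comb_HM].
- exact: comb_CM.
- exact: comb_exCnP.
- exact: comb_CD.
- by move=> [[a b] c] [[d e] f]; split; [split; [apply: comb_SDmeet|apply: comb_HM]|apply: comb_exCnP].
- by move=> [a b] [c d]; split; [apply: comb_exCnP|apply: comb_CM].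
- by move=> [a b] [c d]; split; [apply: comb_CD|apply: comb_exCnP].
- exact: comb_CnP.
- by move=> [a b] [c d]; split; [apply: comb_CD|apply: comb_CnP].
- exact: comb_CnP.
- by move=> [a b] [c d]; split; [apply: comb_CD|apply: comb_CnP].
Qed.

Section P2.
Variables (S R : relstr) (e : rcar R -> rcar S) (r : rcar R -> rcar S -> rcar R)
  (U : pred (rcar S)).
Hypotheses (H1 : forall a b, redge a b -> redge (e a) (e b))
  (H2 : forall a b, redge (e a) (e b) -> redge a b)
  (H3 : forall d a, r d (e a) = a)
  (H4 : List.In U (runary S))
  (H5 : forall a, U (e a))
  (H6 : forall u, U u -> exists a, u = e a)
  (H7 : runary R = [::]).

Lemma part2 P : satisfies P S -> satisfies P R.
Proof.
have T := res_Taylor H1 H2 H3 H4 H5 H6 H7.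
have SM := res_SDmeet H1 H2 H3 H4 H5 H6 H7.
have HM := res_HM H1 H2 H3 H4 H5 H6 H7.
have CM' := res_CM H1 H2 H3 H4 H5 H6 H7.
have CD' := res_CD H1 H2 H3 H4 H5 H6 H7.
have CnP' := res_CnP H1 H2 H3 H4 H5 H6 H7.
have ECnP : (exists n, CnP S n) -> exists n, CnP R n by move=> [n h]; exists n; apply: CnP'.
have C2 := CnP' 2; have C3 := CnP' 3.
case: P => /=; rewrite /Maltsev /SDjoin; tauto.
Qed.
End P2.

Theorem theorem4p3 (P : property) (G H : digraph) :
  ((satisfies P (dstr G) /\ satisfies P (dstr H)) ->
     satisfies P (dunion G H) /\ satisfies P (ounion G H)) /\
  ((~ satisfies P (dstr G) \/ ~ satisfies P (dstr H)) -> ~ satisfies P (ounion G H)).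
Proof.
split.
  move=> [hG hH]; split.
    by apply: (part1 (us := [::])).
  apply: (part1 (us := [:: (fun u => is_left u); (fun u => ~~ is_left u)])) => //.
  by move=> U /= [<-|[<-|[]]] u v ->.
move=> hn hO; have hG : satisfies P (dstr G).
  apply: (part2 (S := ounion G H) (R := dstr G) (e := inl) (r := fun d u => if u is inl a then a else d)
    (U := fun u => is_left u)) hO => //=; first by left.
  by move=> [a|a] // _; exists a.
have hH : satisfies P (dstr H).
  apply: (part2 (S := ounion G H) (R := dstr H) (e := inr) (r := fun d u => if u is inr a then a else d)
    (U := fun u => ~~ is_left u)) hO => //=; first by right; left.
  by move=> [a|a] // _; exists a.
by case: hn.
Qed.
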